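(* Let $H$ be a complex Hilbert space and $V=\mathcal{L}(H)_{sa}$. Let $a$ be a finite rank projection in $V$ and $u\in V_{1/2}(a)$. Then there are projections $a_0,a_1,\dots,a_s$ in $V$ with $a=a_0+\sum_{k=1}^s a_k$ and tripotents $u_k\in V_{1/2}(a_k)$ ($1\le k\le s$) such that the subalgebras $V[a_k,u_k]$ are pairwise orthogonal, $a_0\circ u=0$, and $V[a,u]$ is the finite direct sum $$V[a,u]\approx \mathbb{R}a_0\oplus\Big(\bigoplus_{k=1}^sV[a_k,u_k]\Big).$$
   Context: $V$ is the set of self-adjoint bounded operators on $H$, a real Jordan algebra with product $x\circ y=\frac12(xy+yx)$. A projection is $a=a^2=a^*$; rank is the dimension of its range. A tripotent is $u$ with $u^3=u$. $V_{1/2}(a)=\{x: a\circ x=\frac12x\}$. $V[x,y]$ denotes the Jordan subalgebra generated by $x,y$. Two subalgebras are orthogonal if the Jordan product of any element of one with any element of the other vanishes. *)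

(* Defs.v *)
From HB Require Import structures.
From mathcomp Require Import all_boot all_order all_algebra.
From mathcomp Require Import reals.
From mathcomp Require Import complex.
Set Implicit Arguments. Unset Strict Implicit. Unset Printing Implicit Defensive.
Import Order.TTheory GRing.Theory Num.Theory.
Local Open Scope ring_scope.

Section Hilbert.
Variable R : realType.
Local Notation C := R[i].
Variable H : lmodType C.
Variable ip : H -> H -> C.   (* inner product, linear in the first argument *)

Definition hnorm (x : H) : R := Num.sqrt (complex.Re (ip x x)).

Definition is_hilbert : Prop :=
  [/\ (forall (c : C) (x y z : H), ip (c *: x + y) z = c * ip x z + ip y z),
      (forall x y : H, ip y x = (ip x y)^*),
      (forall x : H, 0 <= ip x x),
      (forall x : H, ip x x = 0 -> x = 0) &
      (forall s : nat -> H,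
         (forall e : R, 0 < e -> exists N, forall m n, (N <= m)%N -> (N <= n)%N ->
              hnorm (s m - s n) < e) ->
         exists l : H, forall e : R, 0 < e -> exists N, forall n, (N <= n)%N ->
              hnorm (s n - l) < e)].

Definition op_linear (f : H -> H) : Prop :=
  forall (c : C) (x y : H), f (c *: x + y) = c *: f x + f y.
Definition op_bounded (f : H -> H) : Prop :=
  exists M : R, forall x, hnorm (f x) <= M * hnorm x.
Definition op_selfadj (f : H -> H) : Prop :=
  forall x y, ip (f x) y = ip x (f y).

Definition inV (f : H -> H) : Prop :=
  [/\ op_linear f, op_bounded f & op_selfadj f].

Definition op0 : H -> H := fun _ => 0.
Definition op_add (f g : H -> H) : H -> H := fun x => f x + g x.
Definition op_rscale (r : R) (f : H -> H) : H -> H := fun x => (r%:C)%C *: f x.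
Definition jprod (f g : H -> H) : H -> H := fun x => 2^-1 *: (f (g x) + g (f x)).

Definition projection (a : H -> H) : Prop := inV a /\ (forall x, a (a x) = a x).

Definition finite_rank (a : H -> H) : Prop :=
  exists (n : nat) (e : 'I_n -> H), forall x, exists c : 'I_n -> C,
    a x = \sum_(i < n) c i *: e i.

Definition tripotent (u : H -> H) : Prop := forall x, u (u (u x)) = u x.

Definition V_half (a x : H -> H) : Prop := inV x /\ jprod a x = op_rscale 2^-1 x.

Definition jsubalg (S : (H -> H) -> Prop) : Prop :=
  [/\ forall z, S z -> inV z,
      forall z w, S z -> S w -> S (op_add z w),
      forall (r : R) z, S z -> S (op_rscale r z) &
      forall z w, S z -> S w -> S (jprod z w)].
Definition gen (x y : H -> H) : (H -> H) -> Prop :=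
  fun z => forall S, jsubalg S -> S x -> S y -> S z.

Definition jorthogonal (A B : (H -> H) -> Prop) : Prop :=
  forall z w, A z -> B w -> jprod z w = op0.

End Hilbert.

(* Main.v *)
Require Import Defs.
From HB Require Import structures.
From mathcomp Require Import all_boot all_order all_algebra.
From mathcomp Require Import reals.
From mathcomp Require Import complex.
From Stdlib Require Import FunctionalExtensionality IndefiniteDescription.
From mathcomp Require Import ring lra.
Set Implicit Arguments. Unset Strict Implicit. Unset Printing Implicit Defensive.
Import Order.TTheory GRing.Theory Num.Theory.
Local Open Scope ring_scope.

Section Main.
Variable R : realType.
Local Notation C := R[i].
Variable H : lmodType C.
Variable ip : H -> H -> C.
Hypothesis hH : is_hilbert ip.

Lemma ipD c x y z : ip (c *: x + y) z = c * ip x z + ip y z.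
Proof. by case: hH => h _ _ _ _; apply: h. Qed.
Lemma ipC x y : ip y x = (ip x y)^*.
Proof. by case: hH => _ h _ _ _; apply: h. Qed.
Lemma ip_ge0 x : 0 <= ip x x.
Proof. by case: hH => _ _ h _ _; apply: h. Qed.
Lemma ip_eq0 x : ip x x = 0 -> x = 0.
Proof. by case: hH => _ _ _ h _; apply: h. Qed.

Lemma ipDl x y z : ip (x + y) z = ip x z + ip y z.
Proof. by rewrite -[x]scale1r ipD mul1r scale1r. Qed.
Lemma ip0l z : ip 0 z = 0.
Proof.
have h := ipDl 0 0 z; rewrite addr0 in h.
have : ip 0 z + ip 0 z = ip 0 z + 0 by rewrite addr0 -h.
by move/addrI.
Qed.
Lemma ipZl c x z : ip (c *: x) z = c * ip x z.
Proof. by rewrite -[c *: x]addr0 ipD ip0l addr0. Qed.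
Lemma ipNl x z : ip (- x) z = - ip x z.
Proof. by rewrite -scaleN1r ipZl mulN1r. Qed.
Lemma ipBl x y z : ip (x - y) z = ip x z - ip y z.
Proof. by rewrite ipDl ipNl. Qed.
Lemma ipDr x y z : ip x (y + z) = ip x y + ip x z.
Proof. by rewrite ipC ipDl rmorphD /= -!ipC. Qed.
Lemma ipZr c x y : ip x (c *: y) = c^* * ip x y.
Proof. by rewrite ipC ipZl rmorphM /= -ipC. Qed.
Lemma ip0r x : ip x 0 = 0.
Proof. by rewrite ipC ip0l rmorph0. Qed.
Lemma ipNr x z : ip x (- z) = - ip x z.
Proof. by rewrite ipC ipNl rmorphN /= -ipC. Qed.
Lemma ipBr x y z : ip x (y - z) = ip x y - ip x z.
Proof. by rewrite ipDr ipNr. Qed.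
Lemma ip_suml I (r : seq I) (P : pred I) (F : I -> H) z :
  ip (\sum_(i <- r | P i) F i) z = \sum_(i <- r | P i) ip (F i) z.
Proof. exact: (big_morph (fun x => ip x z) (fun x y => ipDl x y z) (ip0l z)). Qed.
Lemma ip_sumr I (r : seq I) (P : pred I) (F : I -> H) z :
  ip z (\sum_(i <- r | P i) F i) = \sum_(i <- r | P i) ip z (F i).
Proof. exact: (big_morph (fun x => ip z x) (fun x y => ipDr z x y) (ip0r z)). Qed.

Definition nsq (x : H) : R := complex.Re (ip x x).

Lemma ipxx x : ip x x = (nsq x)%:C%C.
Proof. by rewrite /nsq RRe_real // ger0_real // ip_ge0. Qed.
Lemma nsq_ge0 x : 0 <= nsq x.
Proof. by rewrite -lecR -ipxx ip_ge0. Qed.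
Lemma nsq_eq0 x : nsq x = 0 -> x = 0.
Proof. by move=> h; apply: ip_eq0; rewrite ipxx h. Qed.

Lemma nsqD_le x y : nsq (x + y) <= 2 * nsq x + 2 * nsq y.
Proof.
have e : ip (x + y) (x + y) + ip (x - y) (x - y) = 2 * ip x x + 2 * ip y y.
  rewrite !ipBl !ipDl !ipBr !ipDr; ring.
have e2 : ((nsq (x+y) + nsq (x-y))%:C = (2 * nsq x + 2 * nsq y)%:C)%C.
  by rewrite !rmorphD !rmorphM /= rmorph_nat -!ipxx.
move/complexI: e2 => <-.
by rewrite lerDl nsq_ge0.
Qed.

Lemma nsqZ c x : nsq (c *: x) = complex.Re (c * c^*) * nsq x.
Proof.
rewrite /nsq ipZl ipZr mulrA [ip x x]ipxx.
by case: (c * c^*) => p q /=; rewrite !mulr0 subr0.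
Qed.

Lemma Re_mulJ_ge0 (c : C) : 0 <= complex.Re (c * c^*).
Proof. by case: c => p q /=; rewrite mulrN opprK addr_ge0 // -expr2 sqr_ge0. Qed.

Lemma bounded_sq f : op_bounded ip f <->
  exists K : R, 0 <= K /\ forall x, nsq (f x) <= K * nsq x.
Proof.
split.
  case=> M hM; exists (M ^+ 2); split; first exact: sqr_ge0.
  move=> x; have := hM x; rewrite /hnorm => hx.
  have h0 : 0 <= Num.sqrt (nsq (f x)) := sqrtr_ge0 _.
  have h1 : 0 <= M * Num.sqrt (nsq x) := le_trans h0 hx.
  have := ler_pXn2r (n:=2) isT h0 h1; rewrite hx => /esym /eqP h.
  by rewrite sqr_sqrtr ?nsq_ge0 // exprMn sqr_sqrtr ?nsq_ge0 // in h.
case=> K [K0 hK]; exists (Num.sqrt K) => x; rewrite /hnorm -sqrtrM //.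
by apply: ler_wsqrtr; apply: hK.
Qed.

Section Lin.
Variable f : H -> H.
Hypothesis hf : op_linear f.
Lemma linD x y : f (x + y) = f x + f y.
Proof. by rewrite -[x]scale1r hf !scale1r. Qed.
Lemma lin0 : f 0 = 0.
Proof.
have h := linD 0 0; rewrite addr0 in h.
have : f 0 + f 0 = f 0 + 0 by rewrite addr0 -h.
by move/addrI.
Qed.
Lemma linZ c x : f (c *: x) = c *: f x.
Proof. by rewrite -[c *: x]addr0 hf lin0 addr0. Qed.
Lemma linN x : f (- x) = - f x.
Proof. by rewrite -scaleN1r linZ scaleN1r. Qed.
Lemma linB x y : f (x - y) = f x - f y.
Proof. by rewrite linD linN. Qed.
Lemma lin_sum I (r : seq I) (P : pred I) (F : I -> H) :
  f (\sum_(i <- r | P i) F i) = \sum_(i <- r | P i) f (F i).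
Proof. exact: (big_morph f linD lin0). Qed.
End Lin.

Lemma conjR (r : R) : (r%:C%C)^* = r%:C%C :> C.
Proof. exact: conjc_real. Qed.

Definition bsq (f : H -> H) := exists K : R, 0 <= K /\ forall x, nsq (f x) <= K * nsq x.

Lemma bsq_add f g : bsq f -> bsq g -> bsq (fun x => f x + g x).
Proof.
case=> K [K0 hK] [L [L0 hL]]; exists (2 * K + 2 * L); split.
  by rewrite addr_ge0 // mulr_ge0.
move=> x; apply: le_trans (nsqD_le _ _) _.
rewrite [X in _ <= X]mulrDl -[X in _ <= X + _]mulrA -[X in _ <= _ + X]mulrA.
by apply: lerD; rewrite ler_pM2l.
Qed.

Lemma bsq_scale c f : bsq f -> bsq (fun x => c *: f x).
Proof.
case=> K [K0 hK]; exists (complex.Re (c * c^*) * K); split.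
  by rewrite mulr_ge0 // Re_mulJ_ge0.
by move=> x; rewrite nsqZ -mulrA ler_wpM2l // Re_mulJ_ge0.
Qed.

Lemma bsq_comp f g : bsq f -> bsq g -> bsq (fun x => f (g x)).
Proof.
case=> K [K0 hK] [L [L0 hL]]; exists (K * L); split; first exact: mulr_ge0.
move=> x; apply: le_trans (hK _) _; rewrite -mulrA ler_wpM2l //.
Qed.

Lemma bsq_ext f g : (forall x, f x = g x) -> bsq f -> bsq g.
Proof. by move=> e [K [K0 hK]]; exists K; split => // x; rewrite -e. Qed.

Lemma bsq_id : bsq id.
Proof. by exists 1; split => // x; rewrite mul1r. Qed.

Lemma bsq0 : bsq (fun _ => 0).
Proof. by exists 0; split => // x; rewrite mul0r /nsq ip0l. Qed.

Lemma inV_lin f : inV ip f -> op_linear f. Proof. by case. Qed.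
Lemma inV_sa f : inV ip f -> op_selfadj ip f. Proof. by case. Qed.
Lemma inV_bsq f : inV ip f -> bsq f. Proof. by case=> _ /bounded_sq. Qed.

Lemma inV_intro f : op_linear f -> bsq f -> op_selfadj ip f -> inV ip f.
Proof. by move=> l b s; split => //; apply/bounded_sq. Qed.

Lemma inV_ext f g : (forall x, f x = g x) -> inV ip f -> inV ip g.
Proof. by move=> e; have -> : g = f by apply: functional_extensionality => x; rewrite e. Qed.

Lemma inV0 : inV ip (fun _ => 0).
Proof.
apply: inV_intro; last by move=> x y; rewrite ip0l ip0r.
  by move=> c x y; rewrite scaler0 addr0.
exact: bsq0.
Qed.

Lemma inV_id : inV ip id.
Proof. by apply: inV_intro => //; exact: bsq_id. Qed.

Lemma inV_add f g : inV ip f -> inV ip g -> inV ip (op_add f g).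
Proof.
move=> hf hg; apply: inV_intro.
- move=> c x y; rewrite /op_add (inV_lin hf) (inV_lin hg) scalerDr.
  by rewrite -!addrA; congr (_ + _); rewrite addrCA.
- exact: bsq_add (inV_bsq hf) (inV_bsq hg).
- by move=> x y; rewrite /op_add ipDl ipDr (inV_sa hf) (inV_sa hg).
Qed.

Lemma inV_rscale r f : inV ip f -> inV ip (op_rscale r f).
Proof.
move=> hf; apply: inV_intro.
- by move=> c x y; rewrite /op_rscale (inV_lin hf) scalerDr !scalerA mulrC.
- exact: bsq_scale (inV_bsq hf).
- by move=> x y; rewrite /op_rscale ipZl ipZr conjR (inV_sa hf).
Qed.

Lemma inV_scaleR (c : C) f : c \is Num.real -> inV ip f -> inV ip (fun x => c *: f x).
Proof.
move=> cr hf; apply: inV_ext (inV_rscale (complex.Re c) hf) => x.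
by rewrite /op_rscale RRe_real.
Qed.

Lemma inV_jprod f g : inV ip f -> inV ip g -> inV ip (jprod f g).
Proof.
move=> hf hg; have lf := inV_lin hf; have lg := inV_lin hg.
apply: inV_intro.
- move=> c x y; rewrite /jprod lg lf lf lg !scalerDr !scalerA mulrC.
  by rewrite -!addrA; congr (_ + _); rewrite addrCA.
- apply: bsq_scale; apply: bsq_add; apply: bsq_comp; exact: inV_bsq.
- move=> x y; rewrite /jprod ipZl ipZr ipDl ipDr.
  rewrite (inV_sa hf (g x)) (inV_sa hg x) (inV_sa hg (f x)) (inV_sa hf x).
  by rewrite addrC rmorphV ?unitfE ?pnatr_eq0 // rmorph_nat.
Qed.

Lemma inV_comp f g : inV ip f -> inV ip g -> (forall x, f (g x) = g (f x)) ->
  inV ip (fun x => f (g x)).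
Proof.
move=> hf hg cfg; have lf := inV_lin hf; have lg := inV_lin hg.
apply: inV_intro.
- by move=> c x y; rewrite lg lf.
- apply: bsq_comp; exact: inV_bsq.
- by move=> x y; rewrite (inV_sa hf) (inV_sa hg) cfg.
Qed.

Lemma inV_sum I (r : seq I) (P : pred I) (F : I -> H -> H) :
  (forall i, P i -> inV ip (F i)) -> inV ip (fun x => \sum_(i <- r | P i) F i x).
Proof.
move=> hF; elim: r => [|j r IH].
  by apply: inV_ext inV0 => x; rewrite big_nil.
case Pj: (P j).
  by apply: inV_ext (inV_add (hF j Pj) IH) => x; rewrite big_cons Pj.
by apply: inV_ext IH => x; rewrite big_cons Pj.
Qed.


Section Pev.
Variable T : H -> H.
Hypothesis hT : op_linear T.

Definition pev (p : {poly C}) (y : H) : H := \sum_(i < size p) p`_i *: iter i T y.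

Lemma iter_lin n : op_linear (iter n T).
Proof.
elim: n => [|n IH] c x y //=.
by rewrite IH hT.
Qed.

Lemma iter_comm n y : iter n T (T y) = T (iter n T y).
Proof. by rewrite -iterSr -iterS. Qed.

Lemma pev_wide n (p : {poly C}) (y : H) : (size p <= n)%N ->
  pev p y = \sum_(i < n) p`_i *: iter i T y.
Proof.
move=> hle; rewrite /pev (big_ord_widen n (fun i => p`_i *: iter i T y) hle).
rewrite big_mkcond; apply: eq_bigr => i _; case: ifP => // /negbT.
by rewrite -leqNgt => hi; rewrite nth_default // scale0r.
Qed.

Lemma pevD p q y : pev (p + q) y = pev p y + pev q y.
Proof.
set n := maxn (size p) (size q).
rewrite (@pev_wide n (p + q)); last first.
  by apply: leq_trans (size_polyD _ _) _.
rewrite (@pev_wide n p) ?leq_maxl // (@pev_wide n q) ?leq_maxr //.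
by rewrite -big_split; apply: eq_bigr => i _; rewrite coefD scalerDl.
Qed.

Lemma pevZ c p y : pev (c *: p) y = c *: pev p y.
Proof.
rewrite (@pev_wide (size p) (c *: p)) ?size_scale_leq // /pev scaler_sumr.
by apply: eq_bigr => i _; rewrite coefZ scalerA.
Qed.

Lemma pev0 y : pev 0 y = 0.
Proof. by rewrite /pev size_poly0 big_ord0. Qed.

Lemma pevC c y : pev c%:P y = c *: y.
Proof.
rewrite (@pev_wide 1) ?size_polyC ?leq_b1 // big_ord1 /= coefC /=.
by [].
Qed.

Lemma pevMX p y : pev (p * 'X) y = pev p (T y).
Proof.
rewrite (@pev_wide (size p).+1 (p * 'X)); last first.
  by apply: leq_trans (size_polyMleq _ _) _; rewrite size_polyX addn2.
rewrite big_ord_recl coefMX /= scale0r add0r /pev.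
apply: eq_bigr => i _; rewrite coefMX /= -iterSr.
by [].
Qed.

Lemma pev_lin p : op_linear (pev p).
Proof.
move=> c x y; rewrite /pev scaler_sumr -big_split; apply: eq_bigr => i _.
by rewrite iter_lin scalerDr !scalerA mulrC.
Qed.

Lemma pev_comm p y : T (pev p y) = pev p (T y).
Proof.
rewrite /pev (lin_sum hT); apply: eq_bigr => i _.
by rewrite (linZ hT) iter_comm.
Qed.

Lemma pevM p q y : pev (p * q) y = pev p (pev q y).
Proof.
elim/poly_ind: p y => [|p c IH] y; first by rewrite mul0r !pev0.
rewrite mulrDl mulrAC mul_polyC pevD pevMX IH pevD pevMX pevZ pevC.
by rewrite pev_comm.
Qed.

Lemma pev1 y : pev 1 y = y.
Proof. by rewrite pevC scale1r. Qed.

Lemma pevX y : pev 'X y = T y.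
Proof. by rewrite -[X in pev X]mul1r pevMX pev1. Qed.

Lemma pevN p y : pev (- p) y = - pev p y.
Proof. by rewrite -(scaleN1r p) pevZ scaleN1r. Qed.

Lemma pevB p q y : pev (p - q) y = pev p y - pev q y.
Proof. by rewrite pevD pevN. Qed.

Lemma pevXsubC c y : pev ('X - c%:P) y = T y - c *: y.
Proof. by rewrite pevB pevX pevC. Qed.

Lemma pev_prod I (r : seq I) (P : pred I) (F : I -> {poly C}) y :
  pev (\prod_(i <- r | P i) F i) y = foldr (fun i z => if P i then pev (F i) z else z) y r.
Proof.
elim: r => [|j r IH] /=; first by rewrite big_nil pev1.
by rewrite big_cons; case: (P j) => //; rewrite pevM IH.
Qed.

Lemma inV_iter n : inV ip T -> inV ip (iter n T).
Proof.
move=> hTV; elim: n => [|n IH]; first exact: inV_id.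
apply: inV_ext (inV_comp hTV IH _) => [x //|x].
by rewrite iter_comm.
Qed.

Lemma inV_pev (p : {poly C}) : inV ip T -> (forall i, p`_i \is Num.real) -> inV ip (pev p).
Proof.
move=> hTV hp; apply: inV_sum => i _.
by apply: inV_scaleR; [exact: hp | exact: inV_iter].
Qed.

End Pev.


Lemma dep_vectors n (e : 'I_n -> H) (v : 'I_n.+1 -> H) :
  (forall k, exists c : 'I_n -> C, v k = \sum_(i < n) c i *: e i) ->
  exists c : 'I_n.+1 -> C, (exists k, c k != 0) /\ \sum_(k < n.+1) c k *: v k = 0.
Proof.
move=> hv.
have [A hA] := functional_choice _ hv.
set M : 'M[C]_(n.+1, n) := \matrix_(k, i) A k i.
set K := kermx M.
have hK : K != 0.
  rewrite -mxrank_eq0 mxrank_ker.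
  have := rank_leq_col M; rewrite -subn_eq0; move=> h.
  by rewrite subn_eq0 -ltnNge ltnS.
have [i [j hij]] : exists i j, K i j != 0.
  case/boolP: [exists i, [exists j, K i j != 0]] => [/existsP [i /existsP [j h]]|/negP hn].
    by exists i, j.
  exfalso; move/eqP: hK; apply; apply/matrixP => i j; rewrite [RHS]mxE.
  apply/eqP; apply/negPn/negP => h; apply: hn; apply/existsP; exists i.
  by apply/existsP; exists j.
exists (fun k => K i k); split; first by exists j.
have hKM : forall l, \sum_(k < n.+1) K i k * A k l = 0.
  move=> l; transitivity ((K *m M) i l); last by rewrite mulmx_ker mxE.
  by rewrite [RHS]mxE; apply: eq_bigr => k _; congr (_ * _); rewrite /M mxE.
under eq_bigr => k _ do rewrite hA scaler_sumr.
rewrite exchange_big /=; apply: big1 => l _.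
under eq_bigr => k _ do rewrite scalerA.
by rewrite -scaler_suml hKM scale0r.
Qed.

Section Setting.
Variables a u : H -> H.
Hypothesis ha : projection ip a.
Hypothesis hfin : finite_rank a.
Hypothesis hu : V_half ip a u.

Lemma aV : inV ip a. Proof. by case: ha. Qed.
Lemma uV : inV ip u. Proof. by case: hu. Qed.
Lemma la : op_linear a. Proof. exact: inV_lin aV. Qed.
Lemma lu : op_linear u. Proof. exact: inV_lin uV. Qed.
Lemma aa y : a (a y) = a y. Proof. by case: ha. Qed.

Lemma two_half : (2%:R : C) * 2%:R^-1 = 1.
Proof. by rewrite mulfV // pnatr_eq0. Qed.

Lemma half_real : ((2^-1 : R)%:C)%C = 2^-1 :> C.
Proof. by rewrite rmorphV ?unitfE ?pnatr_eq0 // rmorph_nat. Qed.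

Lemma au_ua y : a (u y) + u (a y) = u y.
Proof.
case: hu => _ /(congr1 (fun f => f y)); rewrite /jprod /op_rscale half_real.
move/(congr1 (fun v => 2 *: v)); rewrite !scalerA two_half !scale1r.
by [].
Qed.

Lemma aua y : a (u (a y)) = 0.
Proof.
have := au_ua (a y); rewrite aa => /eqP; rewrite -subr_eq0 addrK.
by move/eqP.
Qed.

Definition T y := a (u (u (a y))).

Lemma auu y : a (u (u y)) = T y.
Proof.
rewrite -{1}(au_ua y) (linD lu) (linD la) aua add0r.
by [].
Qed.

Lemma uua y : u (u (a y)) = T y.
Proof.
by rewrite -{1}(au_ua (u (a y))) aua (lin0 lu) addr0.
Qed.

Lemma half_double (v : H) : 2^-1 *: (v + v) = v.
Proof. by rewrite -mulr2n -(scaler_nat 2 v) scalerA mulVf ?pnatr_eq0 // scale1r. Qed.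

Lemma juu : jprod u u = fun y => u (u y).
Proof. by apply: functional_extensionality => y; rewrite /jprod half_double. Qed.

Lemma T_jprod : jprod a (jprod u u) = T.
Proof.
apply: functional_extensionality => y; rewrite juu /jprod auu uua.
exact: half_double.
Qed.


Lemma lT : op_linear T.
Proof. by move=> c x y; rewrite /T la lu lu la. Qed.
Lemma TV : inV ip T.
Proof. by rewrite -T_jprod; apply: inV_jprod aV (inV_jprod uV uV). Qed.
Lemma aT y : a (T y) = T y. Proof. by rewrite /T aa. Qed.
Lemma Ta y : T (a y) = T y. Proof. by rewrite /T aa. Qed.
Lemma T_pos y : ip (T y) y = ip (u (a y)) (u (a y)).
Proof. by rewrite /T (inV_sa aV) (inV_sa uV). Qed.

Lemma pevXn m y : pev T ('X^m) y = iter m T y.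
Proof.
elim: m y => [|m IH] y; first by rewrite expr0 pev1.
by rewrite exprSr pevMX IH -iterSr.
Qed.

Lemma pev_sum I (r : seq I) (P : pred I) (F : I -> {poly C}) y :
  pev T (\sum_(i <- r | P i) F i) y = \sum_(i <- r | P i) pev T (F i) y.
Proof. exact: (big_morph (fun p => pev T p y) (fun p q => pevD T p q y) (pev0 T y)). Qed.

Definition annih (p : {poly C}) := forall y, pev T p y = 0.

Lemma annihilator : exists Q : {poly C}, Q != 0 /\ annih Q.
Proof.
case: hfin => n [e he].
have hdep : forall i : 'I_n, exists c : 'I_n.+1 -> C,
    (exists k, c k != 0) /\ \sum_(k < n.+1) c k *: iter k.+1 T (e i) = 0.
  move=> i; apply: dep_vectors => k.
  by rewrite iterS /T; exact: he.
have [cc hcc] := functional_choice _ hdep.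
set q := fun i : 'I_n => \sum_(k < n.+1) cc i k *: 'X^(k.+1).
have hq0 : forall i, q i != 0.
  move=> i; case: (hcc i) => [[j hj] _]; apply/eqP => h.
  have := congr1 (fun p : {poly C} => p`_(j.+1)) h; rewrite /= coef0 /q coef_sum.
  rewrite (bigD1 j) //= coefZ coefXn eqxx mulr1 big1 ?addr0.
    by move/eqP: hj.
  by move=> k hk; rewrite coefZ coefXn eqSS (inj_eq val_inj) eq_sym (negbTE hk) mulr0.
have hqe : forall i, pev T (q i) (e i) = 0.
  move=> i; rewrite /q pev_sum; case: (hcc i) => _ h; rewrite -[RHS]h.
  by apply: eq_bigr => k _; rewrite pevZ pevXn.
exists ((\prod_(i < n) q i) * 'X); split.
  by rewrite mulf_neq0 ?polyX_eq0 // prodf_seq_neq0; apply/allP => i _; exact: hq0.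
move=> y; rewrite pevMX; have [d hd] := he (u (u (a y))).
rewrite (_ : T y = \sum_(i < n) d i *: e i); last exact: hd.
rewrite (lin_sum (pev_lin lT _)); apply: big1 => i _.
rewrite (linZ (pev_lin lT _)) (bigD1 i) //= mulrC (pevM lT) hqe.
by rewrite (lin0 (pev_lin lT _)) scaler0.
Qed.


Lemma K1 z y : ~~ (0 <= z) -> T y = z *: y -> y = 0.
Proof.
move=> hz hTy; apply: ip_eq0 => //.
have e : ip (T y) y = z * ip y y by rewrite hTy ipZl.
rewrite T_pos in e.
apply/eqP; apply/negPn/negP => hyy; move/negP: hz; apply.
have -> : z = ip (u (a y)) (u (a y)) / ip y y by rewrite e mulfK.
by rewrite divr_ge0 // ip_ge0.
Qed.

Lemma K2 z w : 0 <= z -> T (T w - z *: w) - z *: (T w - z *: w) = 0 ->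
  T w - z *: w = 0.
Proof.
move=> hz h; apply: ip_eq0 => //.
have zr : z^* = z by apply: conj_Creal; exact: ger0_real.
have e : forall g, ip g (T w - z *: w) = ip (T g - z *: g) w.
  by move=> g; rewrite ipBr ipZr zr ipBl ipZl (inV_sa TV).
by rewrite e h ip0l.
Qed.

Lemma annih_mul p q : annih p -> annih (q * p).
Proof. by move=> hp y; rewrite (pevM lT) hp (lin0 (pev_lin lT _)). Qed.

Lemma annih_K1 z p : ~~ (0 <= z) -> annih (('X - z%:P) * p) -> annih p.
Proof.
move=> hz hp y; apply: (K1 hz); apply/eqP; rewrite -subr_eq0; apply/eqP.
by rewrite -pevXsubC -(pevM lT).
Qed.

Lemma annih_K2 z p : 0 <= z -> annih (('X - z%:P) * (('X - z%:P) * p)) ->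
  annih (('X - z%:P) * p).
Proof.
move=> hz hp y; rewrite (pevM lT) pevXsubC; apply: K2 => //.
by rewrite -!pevXsubC -!(pevM lT) -mulrA; apply: hp.
Qed.

Definition PX (s : seq C) : {poly C} := \prod_(z <- s) ('X - z%:P).

Lemma PX_rem z s : z \in s -> PX s = ('X - z%:P) * PX (rem z s).
Proof. by move=> h; rewrite /PX (perm_big _ (perm_to_rem h)) big_cons. Qed.

Lemma reduce zs : forall ms, uniq ms -> all (fun m => 0 <= m) ms ->
  annih (PX ms * PX zs) ->
  exists ms', [/\ uniq ms', all (fun m => 0 < m) ms' & annih ('X * PX ms')].
Proof.
elim: zs => [|z zs IH] ms ums pms.
  rewrite /PX big_nil mulr1 -/(PX ms) => hms.
  exists (rem 0 ms); split.
  - exact: rem_uniq.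
  - apply/allP => m; rewrite (mem_rem_uniq _ ums) inE => /andP [m0 mms].
    by rewrite lt0r m0 /=; move/allP: pms; apply.
  - case/boolP: (0 \in ms) => h0.
      by move: hms; rewrite (PX_rem h0) subr0.
    by rewrite rem_id //; exact: annih_mul.
rewrite /PX big_cons -/(PX zs) -/(PX ms) => h.
case/boolP: (0 <= z) => hz; last first.
  apply: (IH ms ums pms); apply: (annih_K1 hz).
  by rewrite mulrCA.
case/boolP: (z \in ms) => hzm.
  apply: (IH ms ums pms).
  rewrite (PX_rem hzm) -mulrA; apply: annih_K2 => //.
  by move: h; rewrite (PX_rem hzm) -mulrA [PX (rem z ms) * _]mulrCA.
apply: (IH (z :: ms)); first by rewrite /= hzm.
  by rewrite /= hz.
by rewrite /PX big_cons -/(PX ms) -mulrA mulrCA.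
Qed.

Lemma spectral_poly : exists ms : seq C,
  [/\ uniq ms, all (fun m => 0 < m) ms & annih ('X * PX ms)].
Proof.
have [Q [Q0 hQ]] := annihilator.
have [r hr] := closed_field_poly_normal Q.
apply: (@reduce r [::]) => //.
rewrite /PX big_nil mul1r => y.
have lc0 : lead_coef Q != 0 by rewrite lead_coef_eq0.
have := hQ y; rewrite {1}hr pevZ => /(congr1 (fun v => (lead_coef Q)^-1 *: v)).
by rewrite scalerA mulVf // scale1r scaler0.
Qed.

Section Spectral.
Variable ms : seq C.
Hypothesis ums : uniq ms.
Hypothesis pms : all (fun m => 0 < m) ms.
Hypothesis hms : annih ('X * PX ms).

Local Notation s := (size ms).
Definition mu (k : nat) : C := ms`_k.

Lemma mu_gt0 k : (k < s)%N -> 0 < mu k.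
Proof. by move=> hk; move/allP: pms; apply; exact: mem_nth. Qed.

Lemma mu_real k : (k < s)%N -> mu k \is Num.real.
Proof. by move=> hk; apply: gtr0_real; exact: mu_gt0. Qed.

Lemma mu_inj j k : (j < s)%N -> (k < s)%N -> (mu j == mu k) = (j == k).
Proof. by move=> hj hk; rewrite /mu nth_uniq. Qed.

Definition cL (k : nat) : C := (mu k * \prod_(j < s | (j : nat) != k) (mu k - mu j))^-1.
Definition gL (k : nat) : {poly C} := cL k *: \prod_(j < s | (j : nat) != k) ('X - (mu j)%:P).
Definition L (k : nat) : {poly C} := 'X * gL k.

Lemma L_horner k x : (L k).[x] = x * (cL k * \prod_(j < s | (j : nat) != k) (x - mu j)).
Proof.
rewrite /L /gL hornerM hornerX hornerZ horner_prod.
by under eq_bigr => j _ do rewrite hornerXsubC.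
Qed.

Lemma L_at0 k : (L k).[0] = 0.
Proof. by rewrite L_horner mul0r. Qed.

Lemma L_at k j : (k < s)%N -> (j < s)%N -> (L k).[mu j] = (j == k)%:R.
Proof.
move=> hk hj; rewrite L_horner.
case: eqP => [->|/eqP hjk].
  rewrite /cL mulrA (mulrC (mu k)) -mulrA mulVf // mulf_neq0 //; first exact: lt0r_neq0 (mu_gt0 hk).
  rewrite prodf_seq_neq0; apply/allP => i _; apply/implyP => hik.
  by rewrite subr_eq0 mu_inj // eq_sym.
rewrite (bigD1 (Ordinal hj)) //= subrr mul0r mulr0 mulr0.
by [].
Qed.

Lemma root_annih f : f.[0] = 0 -> (forall j, (j < s)%N -> f.[mu j] = 0) -> annih f.
Proof.
move=> f0 fm.
have hr : all (root f) (0 :: ms).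
  rewrite /= rootE f0 eqxx /=; apply/allP => m hm.
  by rewrite rootE -(nth_index 0 hm) fm // index_mem.
have ur : uniq_roots (0 :: ms).
  rewrite uniq_rootsE /= ums andbT; apply/negP => h0.
  by move/allP: pms => /(_ _ h0); rewrite ltxx.
have [q ->] := uniq_roots_prod_XsubC hr ur.
rewrite big_cons subr0 -/(PX ms); exact: annih_mul.
Qed.

Lemma polyR_mul (p q : {poly C}) : p \is a polyOver Num.real ->
  q \is a polyOver Num.real -> p * q \is a polyOver Num.real.
Proof.
move=> /polyOverP hp /polyOverP hq; apply/polyOverP => i; rewrite coefM.
by apply: rpred_sum => j _; apply: rpredM.
Qed.

Lemma L_real k : (k < s)%N -> forall i, (L k)`_i \is Num.real.
Proof.
move=> hk i; have : L k \is a polyOver Num.real.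
  rewrite /L /gL -mul_polyC; apply: polyR_mul; first exact: polyOverX.
  apply: polyR_mul.
    rewrite polyOverC /cL realV; apply: rpredM; first exact: mu_real.
    by apply: rpred_prod => j _; apply: rpredB; apply: mu_real.
  apply: (big_ind (fun p : {poly C} => p \is a polyOver Num.real)).
  - by rewrite polyOverC rpred1.
  - exact: polyR_mul.
  - by move=> j _; rewrite polyOverXsubC mu_real.
by move/polyOverP; apply.
Qed.

Definition Pk (k : nat) : H -> H := pev T (L k).

Lemma lP k : op_linear (Pk k). Proof. exact: (pev_lin lT (L k)). Qed.
Lemma PV k : (k < s)%N -> inV ip (Pk k).
Proof. by move=> hk; apply: inV_pev TV _; apply: L_real. Qed.

Lemma PP k y : (k < s)%N -> Pk k (Pk k y) = Pk k y.
Proof.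
move=> hk; have h : annih (L k * L k - L k).
  apply: root_annih => [|j hj]; first by rewrite hornerD hornerN hornerM L_at0 mul0r subrr.
  by rewrite hornerD hornerN hornerM L_at //; case: (j == k); rewrite ?mulr1 ?mulr0 subrr.
by move/eqP: (h y); rewrite pevB (pevM lT) subr_eq0 => /eqP.
Qed.

Lemma PPjk j k y : (j < s)%N -> (k < s)%N -> j != k -> Pk j (Pk k y) = 0.
Proof.
move=> hj hk hjk; have h : annih (L j * L k).
  apply: root_annih => [|i hi]; first by rewrite hornerM L_at0 mul0r.
  rewrite hornerM !L_at //; case: eqP => [->|]; last by rewrite mul0r.
  by rewrite (negbTE hjk) mulr0.
by have := h y; rewrite (pevM lT).
Qed.

Lemma TP k y : (k < s)%N -> T (Pk k y) = mu k *: Pk k y.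
Proof.
move=> hk; have h : annih ('X * L k - mu k *: L k).
  apply: root_annih => [|i hi]; first by rewrite hornerD hornerN hornerM hornerZ L_at0 !mulr0 subrr.
  rewrite hornerD hornerN hornerM hornerZ hornerX !L_at //; case: eqP => [->|]; first by rewrite subrr.
  by rewrite !mulr0 subrr.
by move/eqP: (h y); rewrite pevB (pevM lT) pevX pevZ subr_eq0 => /eqP.
Qed.

Lemma PT k y : Pk k (T y) = T (Pk k y).
Proof. by rewrite /Pk (pev_comm lT). Qed.

Lemma sumP y : \sum_(k < s) mu k *: Pk k y = T y.
Proof.
have h : annih ('X - \sum_(k < s) mu k *: L k).
  apply: root_annih => [|i hi].
    rewrite hornerD hornerN hornerX horner_sum big1 ?subr0 // => k _.
    by rewrite hornerZ L_at0 mulr0.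
  rewrite hornerD hornerN hornerX horner_sum (bigD1 (Ordinal hi)) //= big1.
    by rewrite hornerZ L_at // eqxx mulr1 addr0 subrr.
  move=> k hk; rewrite hornerZ L_at //; case: eqP => [he|]; last by rewrite mulr0.
  by exfalso; move/eqP: hk; apply; apply: val_inj.
move/eqP: (h y); rewrite pevB pevX pev_sum subr_eq0 => /eqP ->.
by apply: eq_bigr => k _; rewrite pevZ.
Qed.

Lemma P_as k y : Pk k y = T (pev T (gL k) y).
Proof. by rewrite /Pk /L (pevM lT) pevX. Qed.

Lemma aP k y : a (Pk k y) = Pk k y.
Proof. by rewrite P_as aT. Qed.

Lemma Pa k y : Pk k (a y) = Pk k y.
Proof. by rewrite /Pk /L mulrC !pevMX Ta. Qed.


Definition A0 y := a y - \sum_(k < s) Pk k y.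

Lemma A0V : inV ip A0.
Proof.
have hs : inV ip (fun y => \sum_(k < s) Pk k y).
  by apply: inV_sum => k _; exact: PV (ltn_ord k).
have h := inV_add aV (inV_rscale (-1) hs).
apply: inV_ext h => y; rewrite /op_add /op_rscale /A0 rmorphN1 scaleN1r.
by [].
Qed.
Lemma lA0 : op_linear A0. Proof. exact: inV_lin A0V. Qed.

Lemma sum_diagP (F : nat -> H) k : (k < s)%N -> (forall j, (j < s)%N -> j != k -> F j = 0) ->
  \sum_(j < s) F j = F k.
Proof.
move=> hk hF; rewrite (bigD1 (Ordinal hk)) //= big1 ?addr0 // => j hj.
apply: hF => //; apply/eqP => e; move/eqP: hj; apply; exact: val_inj.
Qed.

Lemma PA0 k y : (k < s)%N -> Pk k (A0 y) = 0.
Proof.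
move=> hk; rewrite /A0 (linB (lP k)) (lin_sum (lP k)) Pa.
rewrite (sum_diagP (F := fun j => Pk k (Pk j y)) hk) ?PP ?subrr // => j hj hjk.
by rewrite PPjk // eq_sym.
Qed.

Lemma A0P k y : (k < s)%N -> A0 (Pk k y) = 0.
Proof.
move=> hk; rewrite /A0 aP.
rewrite (sum_diagP (F := fun j => Pk j (Pk k y)) hk) ?PP ?subrr // => j hj hjk.
by rewrite PPjk.
Qed.

Lemma TA0 y : T (A0 y) = 0.
Proof.
rewrite /A0 (linB lT) (lin_sum lT) Ta -(sumP y); apply/eqP; rewrite subr_eq0; apply/eqP.
by apply: eq_bigr => k _; rewrite TP.
Qed.

Lemma aA0 y : a (A0 y) = A0 y.
Proof. by rewrite /A0 (linB la) (lin_sum la) aa; under eq_bigr => k _ do rewrite aP. Qed.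

Lemma A0A0 y : A0 (A0 y) = A0 y.
Proof.
rewrite {1}/A0 aA0 big1 ?subr0 // => k _; exact: PA0.
Qed.

Lemma uA0 y : u (A0 y) = 0.
Proof.
apply: ip_eq0 => //.
by rewrite -(aA0 y) -T_pos TA0 ip0l.
Qed.

Lemma A0u y : A0 (u y) = 0.
Proof.
apply: ip_eq0 => //.
by rewrite (inV_sa A0V) A0A0 (inV_sa uV) uA0 ip0r.
Qed.

Definition lam (k : nat) : R := Num.sqrt (complex.Re (mu k)).
Definition cc (k : nat) : C := ((lam k)^-1)%:C%C.

Lemma mu_re k : (k < s)%N -> mu k = (complex.Re (mu k))%:C%C.
Proof. by move=> hk; rewrite RRe_real // mu_real. Qed.

Lemma lam_gt0 k : (k < s)%N -> 0 < lam k.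
Proof.
move=> hk; rewrite /lam sqrtr_gt0 -ltcR -mu_re //; exact: mu_gt0.
Qed.

Lemma ccmu k : (k < s)%N -> cc k * cc k * mu k = 1.
Proof.
move=> hk; rewrite (mu_re hk) /cc -!rmorphM /=.
have h0 : lam k != 0 by rewrite gt_eqF // lam_gt0.
have -> : complex.Re (mu k) = lam k ^+ 2.
  by rewrite sqr_sqrtr // -lecR -mu_re // ltW // mu_gt0.
rewrite (_ : (lam k)^-1 / lam k * (lam k * lam k) = 1) ?rmorph1 //.
by field.
Qed.

Lemma cc_real k : cc k \is Num.real.
Proof. by apply/complex_realP; exists (lam k)^-1. Qed.

Definition Vk (k : nat) y := cc k *: (Pk k (u y) + u (Pk k y)).

Lemma lV k : op_linear (Vk k).
Proof.
move=> c x y; rewrite /Vk !(lP k) !lu !(lP k) !scalerDr !scalerA mulrC.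
by rewrite -!addrA; congr (_ + _); rewrite addrCA.
Qed.

Lemma Vk_jprod k y : Vk k y = (2 * cc k) *: jprod (Pk k) u y.
Proof. by rewrite /jprod /Vk scalerA mulrAC mulfV ?pnatr_eq0 // mul1r. Qed.

Lemma VV k : (k < s)%N -> inV ip (Vk k).
Proof.
move=> hk; apply: inV_ext (inV_scaleR _ (inV_jprod (PV hk) uV)) => [y|].
  by rewrite Vk_jprod.
by rewrite rpredM // ?cc_real // realn.
Qed.


Section Fixk.
Variable k : nat.
Hypothesis hk : (k < s)%N.
Local Notation P := (Pk k).
Local Notation V := (Vk k).
Local Notation c := (cc k).

Lemma PuP j y : (j < s)%N -> Pk k (u (Pk j y)) = 0.
Proof.
move=> hj; rewrite -(aP j y) -(Pa k (u (a (Pk j y)))) aua.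
exact: (lin0 (lP k)).
Qed.

Lemma PuuP j y : (j < s)%N -> Pk k (u (u (Pk j y))) = mu j *: Pk k (Pk j y).
Proof.
move=> hj; rewrite -(aP j y) uua TP // (linZ (lP k)).
by rewrite aP.
Qed.

Lemma PuuPk y : P (u (u (P y))) = mu k *: P y.
Proof. by rewrite PuuP // PP. Qed.

Lemma PVk y : P (V y) = c *: P (u y).
Proof. by rewrite /Vk (linZ (lP k)) (linD (lP k)) PP // PuP // addr0. Qed.

Lemma VPk y : V (P y) = c *: u (P y).
Proof. by rewrite /Vk PP // PuP // add0r. Qed.

Lemma PV_VP y : P (V y) + V (P y) = V y.
Proof. by rewrite PVk VPk -scalerDr. Qed.

Lemma VVk y : V (V y) = (c * c) *: (mu k *: P y + u (P (u y))).
Proof.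
rewrite {1}/Vk PVk /Vk !(linZ lu) (linZ (lP k)) (linD lu) (linD (lP k)).
by rewrite PuP // PuuPk add0r -scalerDr scalerA.
Qed.

Lemma VVVk y : V (V (V y)) = V y.
Proof.
rewrite VVk PVk /Vk !(linZ lu) !(linZ (lP k)) (linD lu) (linD (lP k)).
rewrite PuP // PuuPk add0r !(linZ lu) !scalerA [mu k * c]mulrC -scalerDr scalerA.
have e : c * c * (c * mu k) = c * (c * c * mu k) by ring.
by rewrite e ccmu // mulr1.
Qed.

Lemma PQk y : P (V (V y)) = P y.
Proof.
rewrite VVk (linZ (lP k)) (linD (lP k)) (linZ (lP k)) PP // PuP // addr0.
by rewrite scalerA ccmu // scale1r.
Qed.

Lemma QPk y : V (V (P y)) = P y.
Proof.
by rewrite VVk PP // PuP // (lin0 lu) addr0 scalerA ccmu // scale1r.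
Qed.

Lemma A0Vk y : A0 (V y) = 0.
Proof. by rewrite /Vk (linZ lA0) (linD lA0) A0u A0P // addr0 scaler0. Qed.

Lemma VkA0 y : V (A0 y) = 0.
Proof. by rewrite /Vk uA0 PA0 // (lin0 lu) (lin0 (lP k)) addr0 scaler0. Qed.

End Fixk.

Lemma VjVk j k y : (j < s)%N -> (k < s)%N -> j != k -> Vk j (Vk k y) = 0.
Proof.
move=> hj hk hjk; rewrite /Vk !(linZ lu) !(linZ (lP j)) (linD lu) !(linD (lP j)).
by rewrite !PuP // PuuP // !PPjk // !(addr0, add0r, scaler0, (lin0 lu)).
Qed.

Definition Qk k y := Vk k (Vk k y).
Lemma lQ k : op_linear (Qk k).
Proof. by move=> c x y; rewrite /Qk !(lV k). Qed.

Lemma QjQk j k y : (j < s)%N -> (k < s)%N -> j != k -> Qk j (Qk k y) = 0.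
Proof. by move=> hj hk hjk; rewrite /Qk (VjVk (Vk k y) hj hk hjk) (lin0 (lV j)). Qed.

Lemma A0Q k y : (k < s)%N -> A0 (Qk k y) = 0.
Proof. by move=> hk; rewrite /Qk A0Vk. Qed.

Lemma QA0 k y : (k < s)%N -> Qk k (A0 y) = 0.
Proof. by move=> hk; rewrite /Qk VkA0 // (lin0 (lV k)). Qed.

Definition Gk k (x : H -> H) :=
  [/\ inV ip x, forall y, Qk k (x y) = x y & forall y, x (Qk k y) = x y].

Lemma Gk_jsub k : (k < s)%N -> jsubalg ip (Gk k).
Proof.
move=> hk; split.
- by move=> z [].
- move=> z w [hz1 hz2 hz3] [hw1 hw2 hw3]; split; first exact: inV_add.
    by move=> y; rewrite /op_add (linD (lQ k)) hz2 hw2.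
  by move=> y; rewrite /op_add hz3 hw3.
- move=> r z [hz1 hz2 hz3]; split; first exact: inV_rscale.
    by move=> y; rewrite /op_rscale (linZ (lQ k)) hz2.
  by move=> y; rewrite /op_rscale hz3.
- move=> z w [hz1 hz2 hz3] [hw1 hw2 hw3]; split; first exact: inV_jprod.
    by move=> y; rewrite /jprod (linZ (lQ k)) (linD (lQ k)) hz2 hw2.
  by move=> y; rewrite /jprod hz3 hw3.
Qed.

Lemma gen_Gk k x : (k < s)%N -> gen ip (Pk k) (Vk k) x -> Gk k x.
Proof.
move=> hk hx; apply: hx; first exact: Gk_jsub.
  split; first exact: PV.
    by move=> y; rewrite /Qk QPk.
  by move=> y; rewrite /Qk PQk.
split; first exact: VV.
  by move=> y; rewrite /Qk VVVk.
by move=> y; rewrite /Qk VVVk.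
Qed.

Lemma Gk_cross j k x w y : (j < s)%N -> (k < s)%N -> j != k ->
  Gk j x -> Gk k w -> x (w y) = 0.
Proof.
move=> hj hk hjk [hx1 hx2 hx3] [hw1 hw2 hw3].
rewrite -hw2 -hx3 QjQk //; exact: (lin0 (inV_lin hx1)).
Qed.

Lemma Gk_A0l k x y : (k < s)%N -> Gk k x -> A0 (x y) = 0.
Proof. by move=> hk [_ hx2 _]; rewrite -hx2 A0Q. Qed.

Lemma Gk_A0r k x y : (k < s)%N -> Gk k x -> x (A0 y) = 0.
Proof. by move=> hk [hx1 _ hx3]; rewrite -hx3 QA0 // (lin0 (inV_lin hx1)). Qed.

Lemma Gk_Q j k x y : (j < s)%N -> (k < s)%N -> j != k -> Gk j x -> Qk k (x y) = 0.
Proof.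
move=> hj hk hjk [hx1 hx2 hx3]; rewrite -hx2 QjQk //; by rewrite eq_sym.
Qed.

Lemma jsub_inV (S : (H -> H) -> Prop) z : jsubalg ip S -> S z -> inV ip z.
Proof. by case=> h _ _ _; apply: h. Qed.

Lemma jsub_ext (S : (H -> H) -> Prop) f g : S f -> (forall y, f y = g y) -> S g.
Proof. by move=> hf e; have <- : f = g by apply: functional_extensionality. Qed.

Lemma jsub_sum (S : (H -> H) -> Prop) I (r : seq I) (F : I -> H -> H) f0 :
  jsubalg ip S -> S f0 -> (forall i, S (F i)) ->
  S (fun y => \sum_(i <- r) F i y).
Proof.
move=> [_ hadd hsc _] h0 hF; elim: r => [|j r IH].
  apply: jsub_ext (hsc 0 f0 h0) _ => y.
  by rewrite /op_rscale big_nil rmorph0 scale0r.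
by apply: jsub_ext (hadd _ _ (hF j) IH) _ => y; rewrite /op_add big_cons.
Qed.

Lemma inV_jsub : jsubalg ip (inV ip).
Proof.
split => //.
- by move=> z w; apply: inV_add.
- by move=> r z; apply: inV_rscale.
- by move=> z w; apply: inV_jprod.
Qed.

Lemma gen_inV x y z : inV ip x -> inV ip y -> gen ip x y z -> inV ip z.
Proof. by move=> hx hy hz; apply: hz => //; exact: inV_jsub. Qed.

Lemma gen_x x y : gen ip x y x. Proof. by move=> S. Qed.
Lemma gen_y x y : gen ip x y y. Proof. by move=> S. Qed.
Lemma gen_add x y z w : gen ip x y z -> gen ip x y w -> gen ip x y (op_add z w).
Proof. by move=> hz hw S hS Sx Sy; case: (hS) => _ h _ _; apply: h; [apply: hz|apply: hw]. Qed.
Lemma gen_rscale x y r z : gen ip x y z -> gen ip x y (op_rscale r z).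
Proof. by move=> hz S hS Sx Sy; case: (hS) => _ _ h _; apply: h; apply: hz. Qed.
Lemma gen_jprod x y z w : gen ip x y z -> gen ip x y w -> gen ip x y (jprod z w).
Proof. by move=> hz hw S hS Sx Sy; case: (hS) => _ _ _ h; apply: h; [apply: hz|apply: hw]. Qed.

Definition Dec (z : H -> H) := exists (lam : R) (X : nat -> H -> H),
  (forall k, (k < s)%N -> gen ip (Pk k) (Vk k) (X k)) /\
  forall y, z y = (lam%:C)%C *: A0 y + \sum_(k < s) X k y.

Lemma X_inV (X : nat -> H -> H) k : (k < s)%N -> gen ip (Pk k) (Vk k) (X k) -> inV ip (X k).
Proof. by move=> hk; apply: gen_inV; [exact: PV | exact: VV]. Qed.

Lemma dec_inV z : Dec z -> inV ip z.
Proof.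
case=> lam [X [hX hz]].
have hs : inV ip (fun y => \sum_(k < s) X k y).
  by apply: inV_sum => k _; apply: X_inV (hX k (ltn_ord k)).
by apply: inV_ext (inV_add (inV_rscale lam A0V) hs) => y; rewrite hz.
Qed.

Lemma dec_apply lam X lam' X' z z' y :
  (forall k, (k < s)%N -> gen ip (Pk k) (Vk k) (X k)) ->
  (forall y, z y = (lam%:C)%C *: A0 y + \sum_(k < s) X k y) ->
  (forall k, (k < s)%N -> gen ip (Pk k) (Vk k) (X' k)) ->
  (forall y, z' y = (lam'%:C)%C *: A0 y + \sum_(k < s) X' k y) ->
  z (z' y) = ((lam * lam')%:C)%C *: A0 y + \sum_(k < s) X k (X' k y).
Proof.
move=> hX hz hX' hz'.
rewrite hz hz' (linD lA0) (linZ lA0) A0A0 (lin_sum lA0).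
rewrite big1 ?addr0; last first.
  by move=> k _; apply: (Gk_A0l (k := k)) => //; apply: gen_Gk; last exact: hX'.
rewrite scalerA -rmorphM; congr (_ + _); apply: eq_bigr => k _.
have lX := inV_lin (X_inV (ltn_ord k) (hX k (ltn_ord k))).
have Gx := gen_Gk (ltn_ord k) (hX k (ltn_ord k)).
rewrite (linD lX) (linZ lX) (Gk_A0r _ (ltn_ord k) Gx) scaler0 add0r (lin_sum lX).
apply: (sum_diagP (F := fun j => X k (X' j y)) (ltn_ord k)) => j hj hjk.
apply: (Gk_cross _ (ltn_ord k) hj _ Gx (gen_Gk hj (hX' j hj))).
by rewrite eq_sym.
Qed.

Lemma Dec_jsub : jsubalg ip Dec.
Proof.
split.
- exact: dec_inV.
- move=> z w [lam [X [hX hz]]] [lam' [X' [hX' hw]]].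
  exists (lam + lam'), (fun k => op_add (X k) (X' k)); split.
    by move=> k hk; apply: gen_add; [exact: hX | exact: hX'].
  move=> y; rewrite /op_add hz hw rmorphD scalerDl big_split /=.
  by rewrite -!addrA; congr (_ + _); rewrite addrCA.
- move=> r z [lam [X [hX hz]]].
  exists (r * lam), (fun k => op_rscale r (X k)); split.
    by move=> k hk; apply: gen_rscale; exact: hX.
  move=> y; rewrite /op_rscale hz scalerDr scaler_sumr scalerA -rmorphM.
  by [].
- move=> z w [lam [X [hX hz]]] [lam' [X' [hX' hw]]].
  exists (lam * lam'), (fun k => jprod (X k) (X' k)); split.
    by move=> k hk; apply: gen_jprod; [exact: hX | exact: hX'].
  move=> y; rewrite /jprod (dec_apply y hX hz hX' hw) (dec_apply y hX' hw hX hz).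
  rewrite mulrC addrACA scalerDr half_double; congr (_ + _).
  by rewrite -big_split scaler_sumr.
Qed.

Lemma Dec_a : Dec a.
Proof.
exists 1, Pk; split; first by move=> k hk; exact: gen_x.
by move=> y; rewrite rmorph1 scale1r /A0 subrK.
Qed.

Lemma sumP_A0 y : \sum_(k < s) Pk k y = a y - A0 y.
Proof. by rewrite /A0 opprB addrC subrK. Qed.

Lemma Dec_u : Dec u.
Proof.
exists 0, (fun k => op_rscale (lam k) (Vk k)); split.
  by move=> k hk; apply: gen_rscale; exact: gen_y.
move=> y; rewrite rmorph0 scale0r add0r.
have e : forall k : 'I_s, op_rscale (lam k) (Vk k) y = Pk k (u y) + u (Pk k y).
  move=> k; rewrite /op_rscale /Vk scalerA /cc -rmorphM mulfV ?rmorph1 ?scale1r //.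
  by rewrite gt_eqF // lam_gt0.
rewrite (eq_bigr _ (fun k _ => e k)) big_split /= -(lin_sum lu) !sumP_A0.
by rewrite A0u (linB lu) uA0 !subr0 au_ua.
Qed.

Lemma gen_Dec z : gen ip a u z -> Dec z.
Proof. by move=> hz; apply: hz; [exact: Dec_jsub | exact: Dec_a | exact: Dec_u]. Qed.

Lemma Dec_gen z : Dec z -> gen ip a u z.
Proof.
move=> [lm [X [hX hz]]] S hS Sa Su.
have hS' := hS; case: hS' => _ hadd hsc hjp.
have ST : S T by rewrite -T_jprod; apply: hjp Sa (hjp _ _ Su Su).
have Siter : forall i, S (iter i.+1 T).
  elim=> [|i IH]; first exact: jsub_ext ST _.
  apply: jsub_ext (hjp _ _ ST IH) _ => y.
  by rewrite /jprod iter_comm half_double.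
have SP : forall k, (k < s)%N -> S (Pk k).
  move=> k hk.
  have e : forall y, \sum_(i < size (gL k))
      op_rscale (complex.Re (gL k)`_i) (iter i.+1 T) y = Pk k y.
    move=> y; rewrite P_as (pev_comm lT) /pev; apply: eq_bigr => i _.
    rewrite /op_rscale RRe_real ?iterSr //.
    by have := L_real hk i.+1; rewrite /L coefXM.
  apply: (jsub_ext _ e).
  apply: (@jsub_sum S _ (index_enum 'I_(size (gL k)))
     (fun i : 'I_(size (gL k)) => op_rscale (complex.Re (gL k)`_i) (iter i.+1 T)) a hS Sa).
  by move=> i; exact: hsc.
have SA0 : S A0.
  have hs : S (fun y => \sum_(k < s) Pk k y).
    apply: (@jsub_sum S _ (index_enum 'I_s) (fun k : 'I_s => Pk k) a hS Sa).
    by move=> k; apply: SP.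
  apply: jsub_ext (hadd _ _ Sa (hsc (-1) _ hs)) _ => y.
  by rewrite /op_add /op_rscale rmorphN1 scaleN1r.
have SV : forall k, (k < s)%N -> S (Vk k).
  move=> k hk; have h1 := hsc (2 * (lam k)^-1) _ (hjp _ _ (SP k hk) Su).
  apply: (jsub_ext h1) => y.
  by rewrite /op_rscale Vk_jprod rmorphM rmorph_nat.
have SX : forall k, (k < s)%N -> S (X k).
  by move=> k hk; apply: (hX k hk S hS (SP k hk) (SV k hk)).
have hs : S (fun y => \sum_(k < s) X k y).
  apply: (@jsub_sum S _ (index_enum 'I_s) (fun k : 'I_s => X k) a hS Sa).
  by move=> k; apply: SX.
by apply: jsub_ext (hadd _ _ (hsc lm _ SA0) hs) _ => y; rewrite hz.
Qed.

Lemma Dec_unique lam (X : nat -> H -> H) :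
  (forall k, (k < s)%N -> gen ip (Pk k) (Vk k) (X k)) ->
  (forall y, (lam%:C)%C *: A0 y + \sum_(k < s) X k y = 0) ->
  (forall y, (lam%:C)%C *: A0 y = 0) /\ (forall k, (k < s)%N -> forall y, X k y = 0).
Proof.
move=> hX h; split => [y|k hk y].
  have := congr1 A0 (h y).
  rewrite (linD lA0) (linZ lA0) A0A0 (lin_sum lA0) (lin0 lA0) big1 ?addr0 //.
  by move=> k _; apply: (Gk_A0l (k := k)) => //; apply: gen_Gk; last exact: hX.
have := congr1 (Qk k) (h y).
rewrite (linD (lQ k)) (linZ (lQ k)) QA0 // scaler0 add0r (lin_sum (lQ k)) (lin0 (lQ k)).
have [_ hQ _] := gen_Gk hk (hX k hk).
rewrite (sum_diagP (F := fun j => Qk k (X j y)) hk) ?hQ // => j hj hjk.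
exact: (Gk_Q _ hj hk hjk (gen_Gk hj (hX j hj))).
Qed.

Lemma sum_shift (F : nat -> H) : \sum_(1 <= k < s.+1) F k = \sum_(k < s) F k.+1.
Proof. by rewrite big_add1 /= big_mkord. Qed.

Lemma kpred k : (1 <= k <= s)%N -> (k.-1 < s)%N.
Proof. by case: k => // k /andP [_ h]. Qed.

Lemma kpred_neq j k : (1 <= j <= s)%N -> (1 <= k <= s)%N -> j <> k -> j.-1 != k.-1.
Proof.
case: j => // j; case: k => // k _ _ /= hjk; apply/eqP => e; apply: hjk; by rewrite e.
Qed.

Lemma main_ms : exists (s0 : nat) (a0 : H -> H) (ak uk : nat -> H -> H),
    projection ip a0 /\
        (forall k, (1 <= k <= s0)%N -> projection ip (ak k)) /\
        (forall x, a x = a0 x + \sum_(1 <= k < s0.+1) ak k x) /\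
        (forall k, (1 <= k <= s0)%N -> tripotent (uk k) /\ V_half ip (ak k) (uk k)) /\
        (forall j k, (1 <= j <= s0)%N -> (1 <= k <= s0)%N -> j <> k ->
           jorthogonal (gen ip (ak j) (uk j)) (gen ip (ak k) (uk k))) /\
        jprod a0 u = op0 (H:=H) /\
        (forall z, gen ip a u z <->
           exists (lam : R) (x : nat -> H -> H),
             (forall k, (1 <= k <= s0)%N -> gen ip (ak k) (uk k) (x k)) /\
             (forall y, z y = (lam%:C)%C *: a0 y + \sum_(1 <= k < s0.+1) x k y)) /\
        (forall (lam : R) (x : nat -> H -> H),
           (forall k, (1 <= k <= s0)%N -> gen ip (ak k) (uk k) (x k)) ->
           (forall y, (lam%:C)%C *: a0 y + \sum_(1 <= k < s0.+1) x k y = 0) ->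
           (forall y, (lam%:C)%C *: a0 y = 0) /\
           (forall k, (1 <= k <= s0)%N -> forall y, x k y = 0)).
Proof.
exists s, A0, (fun k => Pk k.-1), (fun k => Vk k.-1).
split; first by split; [exact: A0V | exact: A0A0].
split; first by move=> k hk; split; [exact: PV (kpred hk) | move=> x; exact: PP (kpred hk)].
split; first by move=> x; rewrite sum_shift /= /A0 subrK.
split.
  move=> k hk; split; first by move=> x; exact: (VVVk (kpred hk) x).
  split; first exact: VV (kpred hk).
  apply: functional_extensionality => y.
  by rewrite /jprod /op_rscale PV_VP ?half_real // kpred.
split.
  move=> j k hj hk hjk z w hz hw; apply: functional_extensionality => y.
  have hjk' := kpred_neq hj hk hjk.
  have Gz := gen_Gk (kpred hj) hz; have Gw := gen_Gk (kpred hk) hw.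
  rewrite /jprod /op0 (Gk_cross _ (kpred hj) (kpred hk) hjk' Gz Gw).
  rewrite (Gk_cross _ (kpred hk) (kpred hj) _ Gw Gz) ?addr0 ?scaler0 //.
  by rewrite eq_sym.
split.
  by apply: functional_extensionality => y; rewrite /jprod /op0 A0u uA0 addr0 scaler0.
split.
  move=> z; split.
    move/gen_Dec => [lm [X [hX hz]]]; exists lm, (fun k => X k.-1); split.
      by move=> k hk; exact: hX _ (kpred hk).
    by move=> y; rewrite hz sum_shift.
  case=> lm [x [hx hz]]; apply: Dec_gen; exists lm, (fun k => x k.+1); split.
    by move=> k hk; apply: (hx k.+1); rewrite ltnS hk.
  by move=> y; rewrite hz sum_shift.
move=> lm x hx h.
have hX : forall k, (k < s)%N -> gen ip (Pk k) (Vk k) (x k.+1).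
  by move=> k hk; apply: (hx k.+1); rewrite ltnS hk.
have h' : forall y, (lm%:C)%C *: A0 y + \sum_(k < s) x k.+1 y = 0.
  by move=> y; rewrite -(sum_shift (fun k => x k y)) h.
have [r1 r2] := Dec_unique hX h'.
split => // k hk y; case: k hk => // k hk.
exact: r2 (kpred hk) y.
Qed.
End Spectral. End Setting. End Main.

Theorem theorem2p5 (R : realType) (H : lmodType R[i]) (ip : H -> H -> R[i])
  (hH : is_hilbert ip) (a u : H -> H)
  (ha : projection ip a) (hfin : finite_rank a) (hu : V_half ip a u) :
  exists (s : nat) (a0 : H -> H) (ak uk : nat -> H -> H),
    projection ip a0 /\
        (forall k, (1 <= k <= s)%N -> projection ip (ak k)) /\
        (forall x, a x = a0 x + \sum_(1 <= k < s.+1) ak k x) /\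
        (forall k, (1 <= k <= s)%N -> tripotent (uk k) /\ V_half ip (ak k) (uk k)) /\
        (forall j k, (1 <= j <= s)%N -> (1 <= k <= s)%N -> j <> k ->
           jorthogonal (gen ip (ak j) (uk j)) (gen ip (ak k) (uk k))) /\
        jprod a0 u = op0 (H:=H) /\
        (forall z, gen ip a u z <->
           exists (lam : R) (x : nat -> H -> H),
             (forall k, (1 <= k <= s)%N -> gen ip (ak k) (uk k) (x k)) /\
             (forall y, z y = (lam%:C)%C *: a0 y + \sum_(1 <= k < s.+1) x k y)) /\
        (forall (lam : R) (x : nat -> H -> H),
           (forall k, (1 <= k <= s)%N -> gen ip (ak k) (uk k) (x k)) ->
           (forall y, (lam%:C)%C *: a0 y + \sum_(1 <= k < s.+1) x k y = 0) ->
           (forall y, (lam%:C)%C *: a0 y = 0) /\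
           (forall k, (1 <= k <= s)%N -> forall y, x k y = 0))
.
Proof.

have [ms [ums pms hms]] := spectral_poly hH ha hfin hu.
exact: (main_ms hH ha hu ums pms hms).
Qed.
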